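(* Let $k$ be a field and $Q,q\in k^\times$ with $f_d(Q,q)=\prod_{i=1-d}^{d-1}(Q^{-2}+q^{2i})\neq0$. For each sign $\pm$, the square formed by the quotient maps $\otimes^d\to S^d$, $\otimes^d\to\otimes^d_\pm$, $\otimes^d_\pm\to S^d_\pm$ and the induced map $p_\pm:S^d\to S^d_\pm$ is a pushout; likewise the square with $\wedge^d$ and $\wedge^d_\pm$ in place of $S^d$ and $S^d_\pm$ is a pushout.
   Context: $\mathcal H^B_{Q,q}(d)$ is generated by $T_0,\dots,T_{d-1}$ with relations $(T_0+Q)(T_0-Q^{-1})=0$; $(T_i+q)(T_i-q^{-1})=0$ ($i>0$); $T_iT_{i+1}T_i=T_{i+1}T_iT_{i+1}$ ($i>0$); $T_0T_1T_0T_1=T_1T_0T_1T_0$; $T_iT_j=T_jT_i$ ($|i-j|>1$); $K_i=T_{i-1}\cdots T_1T_0T_1\cdots T_{i-1}$. $V_n$ has basis $v_i$, $i\in\mathbb I_n$ ($\mathbb I_{2s}=\{-\tfrac{2s-1}{2},\dots,\tfrac{2s-1}{2}\}$ half-integers, $\mathbb I_{2s+1}=\{-s,\dots,s\}$); the right action on $V_n^{\otimes d}$: $T_i$ ($i>0$) on factors $i,i+1$ by $R_q$: $v_i\otimes v_j\mapsto q^{-1}v_i\otimes v_j$ ($i=j$), $v_j\otimes v_i$ ($i<j$), $v_j\otimes v_i+(q^{-1}-q)v_i\otimes v_j$ ($i>j$); $T_0$ on the first factor by $K_Q$: $v_i\mapsto Q^{-1}v_i$ ($i=0$), $v_{-i}$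 ($i>0$), $v_{-i}+(Q^{-1}-Q)v_i$ ($i<0$). All functors are evaluated at $V_n$ and are functorial for $\mathrm{Hom}_{\mathcal H^B_{Q,q}(d)}(V_n^{\otimes d},V_m^{\otimes d})$. $\otimes^d(V_n)=V_n^{\otimes d}$; $S^dV_n=V_n^{\otimes d}/\mathrm{span}\{(T_i-q^{-1})w: i>0\}$; $\wedge^dV_n=V_n^{\otimes d}/\mathrm{span}\{(T_i+q)w:i>0\}$; $S^d_+V_n=V_n^{\otimes d}/\mathrm{span}\{(T_0-Q^{-1})w,(T_i-q^{-1})w\}$; $S^d_-V_n=V_n^{\otimes d}/\mathrm{span}\{(T_0+Q)w,(T_i-q^{-1})w\}$; $\wedge^d_+V_n=V_n^{\otimes d}/\mathrm{span}\{(T_0-Q^{-1})w,(T_i+q)w\}$; $\wedge^d_-V_n=V_n^{\otimes d}/\mathrm{span}\{(T_0+Q)w,(T_i+q)w\}$ ($w\in V_n^{\otimes d}$, $i>0$). Eigenvalues of $K_i$ are of the form $Q^{-1}q^{2j}$ (''positive'') or $-Qq^{2j}$ (''negative''), disjoint when $f_d(Q,q)\ne0$; $\otimes^d_+$ is the largest quotient of $\otimes^d$ on which each $K_i$ has only positive eigenvalues and $\otimes^d_-$ the direct summand on which each $K_i$ has only negative eigenvalues, viewed as a quotient of $\otimes^d$ via the projection. *)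

(* Defs.v *)
From HB Require Import structures.
From mathcomp Require Import all_boot all_order all_algebra.
Set Implicit Arguments.
Unset Strict Implicit.
Unset Printing Implicit Defensive.
Import GRing.Theory.
Local Open Scope ring_scope.

(* Conventions.
   - The basis index set I_n of V_n is modelled by 'I_n: the ordinal a
     stands for the label a - (n-1)/2.  Hence order is preserved, the label
     is 0 iff 2a = n-1, positive iff 2a > n-1, and negation of labels is
     rev_ord.
   - The basis of V_n^{(x)d} is indexed by tbasis n d = {ffun 'I_d -> 'I_n}
     (position j : 'I_d is the (j+1)-st tensor factor); vectors of
     V_n^{(x)d} are row vectors 'rV[k]_#|tbasis n d| (coordinates indexed via
     enum_val/enum_rank), and the RIGHT action of h is w |-> w *m (matrix of h).
     Row x of the matrix of T_i is the image of the basis vector x.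
   - Generator T_i (0 <= i < d) is indexed by i : 'I_d.
   - Subspaces of V_n^{(x)d} are row spaces of matrices (mxalgebra, %MS). *)

Section Defs.
Variables (k : fieldType) (Q q : k) (n d : nat).

Definition tbasis := {ffun 'I_d -> 'I_n}.

Definition prev_ord (i : 'I_d) : 'I_d :=
  Ordinal (leq_ltn_trans (leq_pred i) (ltn_ord i)).

Definition Tcoef (i : 'I_d) (x y : tbasis) : k :=
  if val i == 0%N then
    (* K_Q on the first tensor factor *)
    let a := x i in
    let fl : tbasis := [ffun j => if j == i then rev_ord a else x j] in
    if a.*2 == n.-1 then Q^-1 *+ (y == x)
    else if (n.-1 < a.*2)%N then (y == fl)%:R
    else (y == fl)%:R + (Q^-1 - Q) *+ (y == x)
  else
    (* R_q on tensor factors i, i+1 (1-based), i.e. positions i-1, i *)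
    let p := prev_ord i in
    let a := x p in
    let b := x i in
    let sw : tbasis := [ffun j => if j == p then b else if j == i then a else x j] in
    if a == b then q^-1 *+ (y == x)
    else (y == sw)%:R + (if (b < a)%N then (q^-1 - q) *+ (y == x) else 0).

Definition Tmat (i : 'I_d) : 'M[k]_#|tbasis| :=
  \matrix_(r, c) Tcoef i (enum_val r) (enum_val c).

Definition Tn (m : nat) : 'M[k]_#|tbasis| :=
  if insub m is Some i then Tmat i else 1%:M.

(* Kn m is the matrix of K_{m+1} = T_m ... T_1 T_0 T_1 ... T_m *)
Fixpoint Kn (m : nat) : 'M[k]_#|tbasis| :=
  match m with
  | 0 => Tn 0
  | m'.+1 => Tn m *m Kn m' *m Tn m
  end.

(* "positive" (b = true) eigenvalues Q^{-1} q^{2j} and "negative"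
   (b = false) eigenvalues -Q q^{2j}, with |j| <= d-1 *)
Definition sgn_ev (b : bool) (l : k) : Prop :=
  exists2 j : int, (absz j < d)%N &
    l = (if b then Q^-1 * q ^ (j *+ 2) else - (Q * q ^ (j *+ 2))).

Definition fd : k :=
  \prod_(t < (d.*2).-1) (Q ^- 2 + q ^ ((t%:Z - (d.-1)%:Z) *+ 2)).

(* l is an eigenvalue of the endomorphism induced by K on the quotient
   V / rowspace(U) (U assumed K-stable) *)
Definition qeig (K U : 'M[k]_#|tbasis|) (l : k) : Prop :=
  exists w : 'rV[k]_#|tbasis|, ~~ (w <= U)%MS /\ (w *m (K - l%:M) <= U)%MS.

(* V/U is a quotient on which every K_i (1 <= i <= d) acts and has only
   eigenvalues of sign b *)
Definition sign_quotient (b : bool) (U : 'M[k]_#|tbasis|) : Prop :=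
  forall m, (m < d)%N ->
    (U *m Kn m <= U)%MS /\ (forall l, qeig (Kn m) U l -> sgn_ev b l).

(* U is the kernel of V_n^{(x)d} ->> (x)^d_{+/-} V_n : the largest such
   quotient, i.e. the smallest such U *)
Definition sign_kernel (b : bool) (U : 'M[k]_#|tbasis|) : Prop :=
  sign_quotient b U /\ forall U', sign_quotient b U' -> (U <= U')%MS.

Definition sym_rel : 'M[k]_#|tbasis| :=
  (\sum_(i : 'I_d | val i != 0%N) (Tmat i - q^-1%:M))%MS.
Definition wedge_rel : 'M[k]_#|tbasis| :=
  (\sum_(i : 'I_d | val i != 0%N) (Tmat i + q%:M))%MS.
Definition T0_rel (b : bool) : 'M[k]_#|tbasis| :=
  (\sum_(i : 'I_d | val i == 0%N) (Tmat i - (if b then Q^-1 else - Q)%:M))%MS.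
Definition sym_sign (b : bool) : 'M[k]_#|tbasis| := (sym_rel + T0_rel b)%MS.
Definition wedge_sign (b : bool) : 'M[k]_#|tbasis| := (wedge_rel + T0_rel b)%MS.

End Defs.

(* Pushout of a square of quotient maps  A ->> A/X,  A ->> A/Y,
   A/X ->> A/Z,  A/Y ->> A/Z  (A = 'rV_N, X Y Z subspaces).
   The square exists (the induced maps are defined) iff X, Y <= Z; it is a
   pushout iff for every vector space E = 'rV_m and every pair of linear maps
   A/X -> E, A/Y -> E agreeing on A -- i.e. a single linear map f : A -> E
   killing X and Y -- there is a (necessarily unique, since A ->> A/Z is
   onto) map A/Z -> E through which it factors, i.e. f kills Z. *)
Definition quot_pushout (k : fieldType) (N : nat) (X Y Z : 'M[k]_N) : Prop :=
  [/\ (X <= Z)%MS, (Y <= Z)%MS &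
      forall m (f : 'M[k]_(N, m)), X *m f = 0 -> Y *m f = 0 -> Z *m f = 0].

Arguments Tmat {k} Q q n d i.
Arguments Kn {k} Q q n d m.
Arguments qeig {k n d} K U l.
Arguments sign_quotient {k} Q q n d b U.
Arguments sign_kernel {k} Q q n d b U.
Arguments sym_rel {k} Q q n d.
Arguments wedge_rel {k} Q q n d.
Arguments T0_rel {k} Q q n d b.
Arguments sym_sign {k} Q q n d b.
Arguments wedge_sign {k} Q q n d b.

(* Main.v *)
Require Import Defs.
From HB Require Import structures.
From mathcomp Require Import all_boot all_order all_algebra.
From mathcomp Require Import zify ring lra.
Import GRing.Theory.
Local Open Scope ring_scope.

From Stdlib Require Import Classical.
Section SA.
Variables (k : fieldType) (Q q : k) (n d : nat).
Local Notation N := #|tbasis n d|.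

Lemma cap_quot b (U1 U2 : 'M[k]_N) :
  sign_quotient Q q n d b U1 -> sign_quotient Q q n d b U2 ->
  sign_quotient Q q n d b (U1 :&: U2)%MS.
Proof.
move=> h1 h2 m lt; have [s1 e1] := h1 m lt; have [s2 e2] := h2 m lt.
split.
  rewrite sub_capmx; apply/andP; split.
    exact: submx_trans (submxMr _ (capmxSl _ _)) s1.
  exact: submx_trans (submxMr _ (capmxSr _ _)) s2.
move=> l [w [nw hw]]; rewrite sub_capmx negb_and in nw.
case/orP: nw => nw.
  by apply: e1; exists w; split => //; exact: submx_trans hw (capmxSl _ _).
by apply: e2; exists w; split => //; exact: submx_trans hw (capmxSr _ _).
Qed.

Lemma ex_kernel b : exists U, sign_kernel Q q n d b U.
Proof.
suff H : forall r (U : 'M[k]_N), (\rank U < r)%N -> sign_quotient Q q n d b U ->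
   exists U, sign_kernel Q q n d b U.
  apply: (H N.+1 1%:M); first by rewrite ltnS rank_leq_col.
  move=> m _; split; first exact: submx1.
  by move=> l [w [nw _]]; rewrite submx1 in nw.
elim=> [|r IH] U hr hU //.
case: (classic (forall U', sign_quotient Q q n d b U' -> (U <= U')%MS)) => H.
  by exists U.
have [U' HU'] := not_all_ex_not _ _ H.
have [sU' nU] := imply_to_and _ _ HU'.
apply: (IH (U :&: U')%MS); last exact: cap_quot.
have : ((U :&: U') < U)%MS.
  rewrite ltmxE capmxSl /= sub_capmx submx_refl /=.
  by apply/negP.
move/rank_ltmx => h; exact: leq_trans h hr.
Qed.

End SA.
Section SB.
Variables (k : fieldType) (Q q : k) (n d : nat).
Local Notation N := #|tbasis n d|.
Variable (i : 'I_d).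
Hypothesis hi : val i = 0%N.
Hypothesis hQ : Q != 0.

Definition fl (x : tbasis n d) : tbasis n d :=
  [ffun j => if j == i then rev_ord (x i) else x j].
Definition alpha (x : tbasis n d) : k :=
  if (x i).*2 == n.-1 then Q^-1 else if (n.-1 < (x i).*2)%N then 0 else Q^-1 - Q.
Definition beta (x : tbasis n d) : k :=
  if (x i).*2 == n.-1 then 0 else 1.

Lemma Tc0 x y : Tcoef Q q i x y = alpha x * (y == x)%:R + beta x * (y == fl x)%:R.
Proof.
rewrite /Tcoef hi eqxx /= /alpha /beta -/(fl x).
case: eqP => _; first by rewrite mul0r addr0 mulr_natr.
case: ltnP => _; first by rewrite mul0r add0r mul1r.
by rewrite mul1r addrC mulr_natr.
Qed.

Lemma fl_i x : fl x i = rev_ord (x i).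
Proof. by rewrite /fl ffunE eqxx. Qed.

Lemma flK x : fl (fl x) = x.
Proof.
apply/ffunP => j; rewrite /fl !ffunE; case: eqP => [->|//].
by rewrite eqxx rev_ordK.
Qed.

Lemma sum_ind (G : tbasis n d -> k) a :
  \sum_y (y == a)%:R * G y = G a.
Proof.
rewrite (bigD1 a) //= eqxx mul1r big1 ?addr0 // => y /negbTE ->.
by rewrite mul0r.
Qed.

Lemma sum_ev (F : tbasis n d -> k) :
  \sum_(s < N) F (enum_val s) = \sum_x F x.
Proof. by rewrite (big_enum_val F). Qed.

Lemma T0sq : Tmat Q q n d i *m Tmat Q q n d i =
   (Q^-1 - Q) *: Tmat Q q n d i + 1%:M.
Proof.
apply/matrixP => r c; rewrite !mxE.
under eq_bigr do rewrite !mxE.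
rewrite (sum_ev (fun s => Tcoef Q q i (enum_val r) s * Tcoef Q q i s (enum_val c))).
have -> : (r == c) = (enum_val c == enum_val r).
  by rewrite eq_sym (inj_eq enum_val_inj).
set x := enum_val r; set y := enum_val c.
under eq_bigr do rewrite Tc0 mulrDl -!mulrA.
rewrite big_split /= -!mulr_sumr !sum_ind.
rewrite !Tc0 flK /alpha /beta fl_i /=.
set a := nat_of_ord (x i).
have xn : (a < n)%N := ltn_ord (x i).
case: (ltngtP a.*2 n.-1) => h.
- have h1 : ((n - a.+1).*2 != n.-1) && (n.-1 < (n - a.+1).*2)%N.
    apply/andP; split; [apply/eqP|]; rewrite -!muln2 in h *; lia.
  case/andP: h1 => /negbTE -> h2.
  rewrite h2 /=; ring.
- have h1 : ((n - a.+1).*2 != n.-1) && ~~ (n.-1 < (n - a.+1).*2)%N.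
    apply/andP; split; [apply/eqP|apply/negP]; rewrite -!muln2 in h *; lia.
  case/andP: h1 => /negbTE -> /negbTE ->.
  rewrite /=; ring.
- by rewrite /=; field.
Qed.

End SB.
Section SC.
Variables (k : fieldType) (Q q : k) (d : nat).
Hypotheses (hQ : Q != 0) (hq : q != 0) (hfd : fd Q q d != 0).

Lemma fd_ne (j : int) : (absz j < d)%N -> Q ^- 2 + q ^ (j *+ 2) != 0.
Proof.
move=> hj.
have ht : (absz (j + (d.-1)%:Z)%R < (d.*2).-1)%N by rewrite -muln2; lia.
have ej : (Posz (absz (j + (d.-1)%:Z)%R) - (d.-1)%:Z = j) by lia.
apply: contra hfd => /eqP h0.
rewrite /fd (bigD1 (Ordinal ht)) //= ej h0 mul0r //.
Qed.

Lemma no_cross b : ~ sgn_ev Q q d b (if ~~ b then Q^-1 else - Q).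
Proof.
case: b => [] [j hj] /=.
- move=> e.
  set P := q ^ (j *+ 2) in e.
  have hP : P = - Q ^+ 2.
    apply: (mulfI (invr_neq0 hQ)); rewrite -e; by field.
  have := @fd_ne (- j); rewrite abszN => /(_ hj).
  by rewrite mulNrn -invr_expz -/P hP invrN subrr eqxx.
- move=> e.
  have := @fd_ne j hj; set P := q ^ (j *+ 2) in e *.
  have hP : P = - Q ^- 2.
    apply: (mulfI hQ); rewrite -[Q * P]opprK -e; by field.
  by rewrite hP subrr eqxx.
Qed.
End SC.
Fixpoint lamf (k : fieldType) (c : nat -> k) m : k :=
  match m with 0 => c 0%N | m'.+1 => c m * @lamf k c m' * c m end.

Arguments lamf {k}.
Section SD.
Variables (k : fieldType) (Q q : k) (n d : nat).
Local Notation N := #|tbasis n d|.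
Variables (Z : 'M[k]_N) (c : nat -> k).
Hypothesis hT : forall j, (j < d)%N -> (Tn Q q n d j - (c j)%:M <= Z)%MS.

Lemma stabT j m (A : 'M[k]_(m, N)) : (j < d)%N -> (A <= Z)%MS -> (A *m Tn Q q n d j <= Z)%MS.
Proof.
move=> hj hA; apply: submx_trans (submxMr _ hA) _.
have -> : Z *m Tn Q q n d j = Z *m (Tn Q q n d j - (c j)%:M) + c j *: Z.
  by rewrite mulmxBr mul_mx_scalar subrK.
apply: addmx_sub; [apply: submx_trans (submxMl _ _) _; exact: hT | exact: scalemx_sub].
Qed.

Lemma stabK j m (A : 'M[k]_(m, N)) : (j < d)%N -> (A <= Z)%MS -> (A *m Kn Q q n d j <= Z)%MS.
Proof.
elim: j m A => [|j IH] m A hj hA /=; first exact: stabT.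
rewrite !mulmxA; apply: stabT => //; apply: IH; first exact: ltnW.
exact: stabT.
Qed.

Lemma keyK j : (j < d)%N -> (Kn Q q n d j - (lamf c j)%:M <= Z)%MS.
Proof.
elim: j => [|j IH] hj /=; first exact: hT.
set T := Tn Q q n d j.+1; set K := Kn Q q n d j.
have -> : T *m K *m T - (c j.+1 * lamf c j * c j.+1)%:M =
   (T - (c j.+1)%:M) *m K *m T + c j.+1 *: ((K - (lamf c j)%:M) *m T)
   + (c j.+1 * lamf c j) *: (T - (c j.+1)%:M).
  rewrite !mulmxBl !mul_scalar_mx -!scalemxAl scalerBr scalerA scalerBr scale_scalar_mx.
  rewrite !addrA; have gen : forall (V : zmodType) (a b e f : V), a - f = a - b + b - e + e - f by move=> V a b e f; rewrite !subrK.
  exact: gen.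
rewrite !addmx_sub ?scalemx_sub //.
- by apply: stabT => //; apply: stabK; [exact: ltnW | exact: hT].
- by apply: stabT => //; apply: IH; exact: ltnW.
- exact: hT.
Qed.

Lemma scalar_quot b : (forall m, (m < d)%N -> sgn_ev Q q d b (lamf c m)) ->
  sign_quotient Q q n d b Z.
Proof.
move=> hs m hm; split; first exact: stabK.
move=> l [w [nw hw]].
have h2 : (w *m (Kn Q q n d m - (lamf c m)%:M) <= Z)%MS.
  exact: submx_trans (submxMl _ _) (@keyK m hm).
have h3 : ((lamf c m - l) *: w <= Z)%MS.
  have -> : (lamf c m - l) *: w = w *m (Kn Q q n d m - l%:M) - w *m (Kn Q q n d m - (lamf c m)%:M).
    rewrite !mulmxBr !mul_mx_scalar scalerBl.
    have gen : forall (V : zmodType) (a x y : V), y - x = (a - x) - (a - y).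
      by move=> V a x y; rewrite opprB [(a - x) + _]addrC addrA subrK.
    exact: gen.
  by rewrite addmx_sub // ?scalemx_sub // ?eqmx_opp.
case: (eqVneq l (lamf c m)) => [->|ne]; first exact: hs.
have nz : lamf c m - l != 0 by rewrite subr_eq0 eq_sym.
by move: h3; rewrite (eqmx_scale _ nz) (negbTE nw).
Qed.
End SD.

Section SF.
Variables (k : fieldType) (Q q : k) (n d : nat).
Local Notation N := #|tbasis n d|.
Hypotheses (hQ : Q != 0) (hq : q != 0) (hfd : fd Q q d != 0).

Lemma quad (i : 'I_d) (hi : val i = 0%N) (a e : k) :
  a + e = Q^-1 - Q -> a * e = -1 ->
  (Tmat Q q n d i - a%:M) *m (Tmat Q q n d i - e%:M) = 0.
Proof.
move=> hs hp; set T := Tmat Q q n d i.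
rewrite mulmxBl !mulmxBr T0sq // mul_mx_scalar mul_scalar_mx mul_scalar_mx.
rewrite scale_scalar_mx hp -/T -hs scalerDl raddfN /=.
have gen : forall (V : zmodType) (x y z : V), x + y + z - y - (x - - z) = 0.
  by move=> V x y z; apply/eqP; rewrite opprK subr_eq0 [x + y + z]addrAC addrK.
exact: gen.
Qed.

Lemma Kn0 (i : 'I_d) : val i = 0%N -> Kn Q q n d 0 = Tmat Q q n d i.
Proof.
move=> hi /=; rewrite /Tn; case: insubP => [i' _ vi'|].
  by congr Tmat; apply: val_inj; rewrite vi' hi.
by rewrite -hi ltn_ord.
Qed.

Lemma T0_sub b (U : 'M[k]_N) (i : 'I_d) : val i = 0%N ->
  sign_quotient Q q n d b U ->
  (Tmat Q q n d i - (if b then Q^-1 else - Q)%:M <= U)%MS.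
Proof.
move=> hi hU.
have hd : (0 < d)%N by rewrite -hi ltn_ord.
have [_ he] := hU 0%N hd.
apply/row_subP => r; rewrite -[X in row r X]mul1mx row_mul.
set w := row r 1%:M *m _.
apply/negPn/negP => nw.
apply: (@no_cross k Q q d hQ hq hfd b); apply: he.
exists w; split => //.
rewrite (@Kn0 i hi) /w -mulmxA (@quad i hi) ?mulmx0 ?sub0mx //; case: (b) => /=.
all: try (by field); ring.
Qed.

Lemma lam_eq (cb ci : k) m :
  lamf (fun j => if j == 0%N then cb else ci) m = cb * ci ^+ (m * 2).
Proof.
elim: m => [|m IH] /=; first by rewrite expr0 mulr1.
by rewrite IH mulSnr exprD; ring.
Qed.

Lemma pushout_gen b (ci : k) (R U : 'M[k]_N) :
  (forall i : 'I_d, val i != 0%N -> (Tmat Q q n d i - ci%:M <= R)%MS) ->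
  (forall m, (m < d)%N -> sgn_ev Q q d b ((if b then Q^-1 else -Q) * ci ^+ (m * 2))) ->
  sign_kernel Q q n d b U ->
  quot_pushout R U (R + T0_rel Q q n d b)%MS.
Proof.
move=> hR hs [hU hmin].
set cb := (if b then Q^-1 else -Q).
have hT0 : (T0_rel Q q n d b <= U)%MS.
  apply/sumsmx_subP => i /eqP hi; exact: T0_sub.
split.
- exact: addsmxSl.
- apply: hmin.
  apply: (@scalar_quot k Q q n d _ (fun j => if j == 0%N then cb else ci)).
  + move=> j hj; rewrite /Tn; case: insubP => [i' _ vi'|]; last by rewrite hj.
    rewrite -vi'; case: eqP => h0.
    * apply: submx_trans (addsmxSr _ _); apply: (sumsmx_sup i') => //; exact/eqP.
    * apply: submx_trans (addsmxSl _ _); apply: hR; exact/eqP.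
  + by move=> m hm; rewrite lam_eq; exact: hs.
- move=> m f hX hY; apply/sub_kermxP.
  apply: (submx_trans (addsmxS (submx_refl R) hT0)).
  by rewrite addsmx_sub; apply/andP; split; apply/sub_kermxP.
Qed.
End SF.

Theorem proposition7p8 (k : fieldType) (Q q : k) (d : nat) :
  Q != 0 -> q != 0 -> fd Q q d != 0 ->
  forall (n : nat) (b : bool),
    (exists U, sign_kernel Q q n d b U) /\
    forall U : 'M[k]_#|tbasis n d|, sign_kernel Q q n d b U ->
      quot_pushout (sym_rel Q q n d) U (sym_sign Q q n d b) /\
      quot_pushout (wedge_rel Q q n d) U (wedge_sign Q q n d b).
Proof.
move=> hQ hq hfd n b; split; first exact: ex_kernel.
move=> U hU; split.
- apply: (@pushout_gen k Q q n d hQ hq hfd b q^-1) => //.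
  + by move=> i hi; apply: (sumsmx_sup i).
  + move=> m hm; exists (- m%:Z); first by rewrite abszN.
    have e : (q^-1) ^+ (m * 2) = q ^ ((- m%:Z) *+ 2).
      by rewrite exprnP exprz_inv; congr (_ ^ _); lia.
    by case: (b); rewrite e ?mulNr.
- apply: (@pushout_gen k Q q n d hQ hq hfd b (- q)) => //.
  + move=> i hi; have -> : (- q)%:M = - q%:M :> 'M[k]_#|tbasis n d| by rewrite raddfN.
    rewrite opprK; apply: submx_trans (addmx_sub_adds (submx_refl _) (submx_refl _)) _.
    by rewrite /wedge_rel; apply: (sumsmx_sup i).
  + move=> m hm; exists (m%:Z); first by [].
    have e : (- q) ^+ (m * 2) = q ^ (m%:Z *+ 2).
      by rewrite mulnC exprM sqrrN -exprM exprnP; congr (_ ^ _); lia.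
    by case: (b); rewrite e ?mulNr.
Qed.
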